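(* Consider the Robertson-Walker Riemann-Cartan geometry in coordinates $(t,r,\theta,\phi)$ with coframe $\mathbf h^1=dt$, $\mathbf h^2=\frac{a(t)}{\sqrt{1-kr^2}}dr$, $\mathbf h^3=a(t)r\,d\theta$, $\mathbf h^4=a(t)r\sin\theta\,d\phi$ ($a>0$, $k\in\mathbb R$) and metric-compatible connection whose only non-zero components (up to $\omega_{abc}=-\omega_{bac}$) are $\omega_{122}=\omega_{133}=\omega_{144}=W_1(t)$, $\omega_{234}=-\omega_{243}=\omega_{342}=W_2(t)$, $\omega_{233}=\omega_{244}=-\frac{\sqrt{1-kr^2}}{a r}$, $\omega_{344}=-\frac{\cos\theta}{a r\sin\theta}$. Then the curvature of this connection vanishes (teleparallel RW geometry) if and only if $(W_1,W_2)$ is one of (1) $W_1=0,\ W_2=-\frac{\sqrt k}{a}$; (2) $W_1=0,\ W_2=\frac{\sqrt k}{a}$; (3) $W_1=-\frac{\sqrt{-k}}{a},\ W_2=0$; (4) $W_1=\frac{\sqrt{-k}}{a},\ W_2=0$, where real-valuedness requires $k\ge0$ in cases (1),(2) and $k\le0$ in cases (3),(4); for $k=0$ the four cases coincide.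
   Context: Frame indices in $\{1,2,3,4\}$, $\eta=\mathrm{diag}(-1,1,1,1)$, $\omega_{abc}=\eta_{ad}\omega^d{}_{bc}$, $\boldsymbol\omega^a{}_b=\omega^a{}_{bc}\mathbf h^c$, dual frame $\mathbf h_a=h_a{}^\mu\partial_\mu$. Curvature: $R^a{}_{bcd}=h_c{}^\mu\partial_\mu\omega^a{}_{bd}-h_d{}^\nu\partial_\nu\omega^a{}_{bc}+\omega^a{}_{fc}\omega^f{}_{bd}-\omega^a{}_{fd}\omega^f{}_{bc}$. *)

(* Defs.v *)
From Stdlib Require Import Reals.
From Coquelicot Require Import Coquelicot.
Open Scope R_scope.

(* Frame / coordinate indices 1..4 ; coordinates (t, r, theta, phi) = (1,2,3,4). *)
Inductive Idx := I1 | I2 | I3 | I4.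

Definition sum4 (f : Idx -> R) : R := f I1 + f I2 + f I3 + f I4.

(* Minkowski metric eta = diag(-1,1,1,1) (its own inverse). *)
Definition eta (i : Idx) : R := match i with I1 => -1 | _ => 1 end.

Definition pd (F : R -> R -> R -> R -> R) (mu : Idx) (t r th ph : R) : R :=
  match mu with
  | I1 => Derive (fun s => F s r th ph) t
  | I2 => Derive (fun s => F t s th ph) r
  | I3 => Derive (fun s => F t r s ph) th
  | I4 => Derive (fun s => F t r th s) ph
  end.

Definition coframe (a : R -> R) (k : R) (c mu : Idx) (t r th : R) : R :=
  match c, mu with
  | I1, I1 => 1
  | I2, I2 => a t / sqrt (1 - k * r ^ 2)
  | I3, I3 => a t * r
  | I4, I4 => a t * r * sin th
  | _, _ => 0
  end.

(* Lower-index connection components omega_{abc} of the RW ansatz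
   (all components listed, including those obtained from omega_{abc} = -omega_{bac}). *)
Definition omega_low (a W1 W2 : R -> R) (k : R) (i j l : Idx) (t r th : R) : R :=
  match i, j, l with
  | I1, I2, I2 | I1, I3, I3 | I1, I4, I4 => W1 t
  | I2, I1, I2 | I3, I1, I3 | I4, I1, I4 => - W1 t
  | I2, I3, I4 | I3, I4, I2 | I4, I2, I3 => W2 t
  | I2, I4, I3 | I3, I2, I4 | I4, I3, I2 => - W2 t
  | I2, I3, I3 | I2, I4, I4 => - (sqrt (1 - k * r ^ 2) / (a t * r))
  | I3, I2, I3 | I4, I2, I4 => sqrt (1 - k * r ^ 2) / (a t * r)
  | I3, I4, I4 => - (cos th / (a t * r * sin th))
  | I4, I3, I4 => cos th / (a t * r * sin th)
  | _, _, _ => 0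
  end.

Definition omega_up (a W1 W2 : R -> R) (k : R) (i j l : Idx) (t r th : R) : R :=
  eta i * omega_low a W1 W2 k i j l t r th.

(* Coordinate components of the connection 1-form
   omega^a_b = omega^a_{bc} h^c :  omega^a_{b mu} = sum_c omega^a_{bc} h^c_mu. *)
Definition omega_coord (a W1 W2 : R -> R) (k : R) (i j mu : Idx)
  (t r th ph : R) : R :=
  sum4 (fun c => omega_up a W1 W2 k i j c t r th * coframe a k c mu t r th).

(* Coordinate components of the curvature 2-form
   R^a_b = d omega^a_b + omega^a_c /\ omega^c_b :
   R^a_{b mu nu} = d_mu omega^a_{b nu} - d_nu omega^a_{b mu}
                  + omega^a_{c mu} omega^c_{b nu} - omega^a_{c nu} omega^c_{b mu}. *)
Definition curvature (a W1 W2 : R -> R) (k : R) (i j mu nu : Idx)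
  (t r th ph : R) : R :=
  pd (omega_coord a W1 W2 k i j nu) mu t r th ph
  - pd (omega_coord a W1 W2 k i j mu) nu t r th ph
  + sum4 (fun c =>
      omega_coord a W1 W2 k i c mu t r th ph * omega_coord a W1 W2 k c j nu t r th ph
      - omega_coord a W1 W2 k i c nu t r th ph * omega_coord a W1 W2 k c j mu t r th ph).

Definition flat (a W1 W2 : R -> R) (k : R) : Prop :=
  forall t r th ph, 0 < r -> 0 < 1 - k * r ^ 2 -> 0 < th < PI ->
  forall i j mu nu, curvature a W1 W2 k i j mu nu t r th ph = 0.

(* Main.v *)
Require Import Defs.
From Stdlib Require Import Reals Lra Nsatz FunctionalExtensionality.
From Coquelicot Require Import Coquelicot.
Open Scope R_scope.

Ltac compD a :=
  repeat match goal with
  | |- context [Derive ?f ?x] =>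
     lazymatch f with
     | (fun x => a x) => fail
     | a => fail
     | _ => erewrite (is_derive_unique f x); [| auto_derive; [..| reflexivity] ]
     end
  end.

Lemma curv_anti a W1 W2 k i j mu nu t r th ph :
  curvature a W1 W2 k i j mu nu t r th ph = - curvature a W1 W2 k i j nu mu t r th ph.
Proof. unfold curvature, sum4; ring. Qed.

Lemma curv_diag a W1 W2 k i j mu t r th ph :
  curvature a W1 W2 k i j mu mu t r th ph = 0.
Proof. unfold curvature, sum4; ring. Qed.

Lemma back_core (a : R -> R) (c1 c2 r th t ph : R)
  (Hda : forall t, ex_derive a t) (Hat : a t <> 0) (Hr : r <> 0) (Hs : sin th <> 0)
  (Hk : 0 < 1 - (c2*c2 - c1*c1) * r^2) i j mu nu :
  (c1 = 0 \/ c2 = 0) ->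
  (mu = I1 /\ (nu = I2 \/ nu = I3 \/ nu = I4)) \/ (mu = I2 /\ (nu = I3 \/ nu = I4)) \/ (mu = I3 /\ nu = I4) ->
  curvature a (fun t => c1 / a t) (fun t => c2 / a t) (c2*c2-c1*c1) i j mu nu t r th ph = 0.
Proof.
  intros Hc Hmn.
  assert (Hk' : 1 + - ((c2*c2 - c1*c1) * (r*(r*1))) = 1 - (c2*c2 - c1*c1) * r^2) by ring.
  assert (Har : a t * r <> 0) by (apply Rmult_integral_contrapositive_currified; auto).
  assert (Hars : a t * r * sin th <> 0) by (apply Rmult_integral_contrapositive_currified; auto).
  assert (HS := sqrt_sqrt _ (Rlt_le _ _ Hk)).
  assert (HS0 : sqrt (1 - (c2*c2 - c1*c1) * r^2) <> 0) by (apply Rgt_not_eq, sqrt_lt_R0; lra).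
  destruct Hc; subst;
  destruct Hmn as [[-> [-> | [-> | ->]]] | [[-> [-> | ->]] | [-> ->]]];
  destruct i, j;
  unfold curvature, pd, omega_coord, sum4, omega_up, eta, omega_low, coframe;
  cbv beta iota;
  compD a;
  try (repeat split; first [exact I | apply Hda | rewrite Hk'; assumption | assumption]);
  rewrite ?Hk';
  set (S := sqrt (1 - _ * r^2)) in *;
  try set (da := Derive (fun x => a x) t); replace (r^2) with (r*r) in HS by ring;
  field_simplify_eq; try tauto; clear Hk'; cbn [pow]; nsatz.


Qed.

Lemma compA (a W1 W2 : R -> R) k r th t ph
  (Hda : forall t, ex_derive a t) (HdW1 : forall t, ex_derive W1 t) (HdW2 : forall t, ex_derive W2 t)
  (Hat : a t <> 0) (Hr : r <> 0) (Hs : sin th <> 0) (Hk : 0 < 1 - k * r^2) :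
  curvature a W1 W2 k I1 I2 I3 I4 t r th ph = 2 * W1 t * W2 t * a t ^ 2 * r ^ 2 * sin th.
Proof.
  assert (Hk' : 1 + - (k * (r*(r*1))) = 1 - k * r^2) by ring.
  assert (Har : a t * r <> 0) by (apply Rmult_integral_contrapositive_currified; auto).
  assert (Hars : a t * r * sin th <> 0) by (apply Rmult_integral_contrapositive_currified; auto).
  assert (HS0 : sqrt (1 - k * r^2) <> 0) by (apply Rgt_not_eq, sqrt_lt_R0; lra).
  unfold curvature, pd, omega_coord, sum4, omega_up, eta, omega_low, coframe;
  cbv beta iota;
  compD a;
  try (repeat split; first [exact I | apply Hda | apply HdW1 | apply HdW2 | rewrite Hk'; assumption | assumption]);
  rewrite ?Hk'.
  field_simplify_eq; auto.
Qed.

Lemma compB (a W1 W2 : R -> R) k r th t ph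
  (Hda : forall t, ex_derive a t) (HdW1 : forall t, ex_derive W1 t) (HdW2 : forall t, ex_derive W2 t)
  (Hat : a t <> 0) (Hr : r <> 0) (Hs : sin th <> 0) (Hk : 0 < 1 - k * r^2) :
  curvature a W1 W2 k I2 I3 I2 I3 t r th ph = r / sqrt (1 - k * r^2) * (k + a t ^ 2 * (W1 t ^ 2 - W2 t ^ 2)).
Proof.
  assert (Hk' : 1 + - (k * (r*(r*1))) = 1 - k * r^2) by ring.
  assert (Har : a t * r <> 0) by (apply Rmult_integral_contrapositive_currified; auto).
  assert (Hars : a t * r * sin th <> 0) by (apply Rmult_integral_contrapositive_currified; auto).
  assert (HS0 : sqrt (1 - k * r^2) <> 0) by (apply Rgt_not_eq, sqrt_lt_R0; lra).
  unfold curvature, pd, omega_coord, sum4, omega_up, eta, omega_low, coframe;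
  cbv beta iota;
  compD a;
  try (repeat split; first [exact I | apply Hda | apply HdW1 | apply HdW2 | rewrite Hk'; assumption | assumption]);
  rewrite ?Hk'.
  field_simplify_eq; auto.
Qed.

Lemma back_flat (a W1 W2 : R -> R) (k c1 c2 : R)
  (Ha : forall t, 0 < a t) (Hda : forall t, ex_derive a t)
  (Hc : c1 = 0 \/ c2 = 0) (Hkc : k = c2*c2 - c1*c1)
  (E1 : forall t, W1 t = c1 / a t) (E2 : forall t, W2 t = c2 / a t) :
  flat a W1 W2 k.
Proof.
  assert (W1 = fun t => c1 / a t) by (apply functional_extensionality; auto). subst W1.
  assert (W2 = fun t => c2 / a t) by (apply functional_extensionality; auto). subst W2.
  subst k.
  intros t r th ph Hr Hk Hth i j mu nu.
  assert (Hs: sin th <> 0) by (apply Rgt_not_eq, sin_gt_0; lra).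
  assert (Hat: a t <> 0) by (specialize (Ha t); lra).
  assert (Hr': r <> 0) by lra.
  destruct mu, nu; try apply curv_diag;
  first [ solve [apply back_core; auto 10] | rewrite curv_anti; apply Ropp_eq_0_compat; apply back_core; auto 10 ].
Qed.

Lemma sign_const (g : R -> R) c : (forall x, continuity_pt g x) -> 0 < c -> (forall t, g t * g t = c) ->
  (forall t, g t = sqrt c) \/ (forall t, g t = - sqrt c).
Proof.
  intros Hg Hc Hsq.
  assert (Hne : forall t, g t <> 0) by (intros t E; specialize (Hsq t); rewrite E in Hsq; lra).
  assert (Hsame : forall x y, 0 < g x * g y).
  { intros x y. destruct (Rlt_dec 0 (g x * g y)) as [h|h]; [exact h|].
    exfalso. apply Rnot_lt_le in h.
    destruct (Rle_dec x y) as [hxy|hxy].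
    - destruct (IVT_cor g x y Hg hxy h) as [z [_ hz]]. exact (Hne z hz).
    - destruct (IVT_cor g y x Hg (Rlt_le _ _ (Rnot_le_lt _ _ hxy))) as [z [_ hz]].
      + rewrite Rmult_comm; exact h.
      + exact (Hne z hz). }
  assert (E := sqrt_sqrt c (Rlt_le _ _ Hc)).
  assert (Hpos := sqrt_lt_R0 c Hc).
  assert (Hsq' : forall t, g t = sqrt c \/ g t = - sqrt c).
  { intros t.
    assert (H0 : (g t - sqrt c) * (g t + sqrt c) = 0).
    { replace ((g t - sqrt c) * (g t + sqrt c)) with (g t * g t - sqrt c * sqrt c) by ring.
      rewrite Hsq, E; ring. }
    apply Rmult_integral in H0 as [H0|H0]; [left|right]; lra. }
  destruct (Hsq' 0) as [h0|h0]; [left|right]; intro t; destruct (Hsq' t) as [h|h]; auto;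
    exfalso; specialize (Hsame 0 t); rewrite h0, h in Hsame; nra.
Qed.

Lemma cont_prod (f a : R -> R) : (forall t, ex_derive f t) -> (forall t, ex_derive a t) ->
  forall x, continuity_pt (fun t => f t * a t) x.
Proof.
  intros Hf Ha x. apply continuity_pt_filterlim. apply (ex_derive_continuous (fun t => f t * a t) x).
  auto_derive. auto.
Qed.

Theorem mainTheorem9 (a W1 W2 : R -> R) (k : R)
  (Ha : forall t, 0 < a t)
  (Hda : forall t, ex_derive a t)
  (HdW1 : forall t, ex_derive W1 t)
  (HdW2 : forall t, ex_derive W2 t) :
  flat a W1 W2 k <->
  ((0 <= k /\ forall t, W1 t = 0 /\ W2 t = - (sqrt k / a t)) \/
   (0 <= k /\ forall t, W1 t = 0 /\ W2 t = sqrt k / a t) \/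
   (k <= 0 /\ forall t, W1 t = - (sqrt (- k) / a t) /\ W2 t = 0) \/
   (k <= 0 /\ forall t, W1 t = sqrt (- k) / a t /\ W2 t = 0)).
Proof.
  split.
  - intros Hf.
    set (r0 := / (1 + Rabs k)).
    assert (Hab : 0 <= Rabs k) by apply Rabs_pos.
    assert (Hr0 : 0 < r0) by (unfold r0; apply Rinv_0_lt_compat; lra).
    assert (Hr1 : r0 * (1 + Rabs k) = 1) by (unfold r0; field; lra).
    assert (Hk0 : 0 < 1 - k * r0 ^ 2).
    { assert (k <= Rabs k) by apply Rle_abs. assert (r0 <= 1) by nra. nra. }
    assert (Hth : 0 < PI / 2 < PI) by (pose proof PI_RGT_0; lra).
    assert (HS0 : sqrt (1 - k * r0^2) <> 0) by (apply Rgt_not_eq, sqrt_lt_R0; lra).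
    assert (HA : forall t, W1 t * W2 t = 0).
    { intro t. pose proof (Hf t r0 (PI/2) 0 Hr0 Hk0 Hth I1 I2 I3 I4) as H.
      assert (Hat := Ha t).
      rewrite compA in H; auto; [| lra | lra | rewrite sin_PI2; lra].
      rewrite sin_PI2 in H.
      assert (X : 2 * a t ^ 2 * r0 ^ 2 <> 0).
      { apply Rgt_not_eq. apply Rmult_lt_0_compat; [apply Rmult_lt_0_compat; [lra| apply pow_lt; lra] | apply pow_lt; lra]. }
      apply (Rmult_eq_reg_l (2 * a t ^ 2 * r0 ^ 2)); auto. rewrite Rmult_0_r, <- H; ring. }
    assert (HB : forall t, k + a t ^ 2 * (W1 t ^ 2 - W2 t ^ 2) = 0).
    { intro t. pose proof (Hf t r0 (PI/2) 0 Hr0 Hk0 Hth I2 I3 I2 I3) as H.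
      assert (Hat := Ha t).
      rewrite compB in H; auto; [| lra | lra | rewrite sin_PI2; lra].
      assert (X : r0 / sqrt (1 - k * r0^2) <> 0).
      { unfold Rdiv; apply Rmult_integral_contrapositive_currified; [lra | apply Rinv_neq_0_compat; auto]. }
      apply Rmult_integral in H as [H|H]; [contradiction | exact H]. }
    destruct (Rtotal_order k 0) as [Hn|[Hz|Hp]].
    +
      assert (HW2 : forall t, W2 t = 0).
      { intro t. destruct (Rmult_integral _ _ (HA t)) as [h|h]; auto.
        exfalso. specialize (HB t). rewrite h in HB. assert (Hat := Ha t). nra. }
      assert (Hg : forall t, (W1 t * a t) * (W1 t * a t) = - k).
      { intro t. specialize (HB t). rewrite HW2 in HB. nra. }
      destruct (sign_const (fun t => W1 t * a t) (- k) (cont_prod W1 a HdW1 Hda) ltac:(lra) Hg) as [G|G].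
      * right; right; right. split; [lra|]. intro t. split; auto.
        specialize (G t). simpl in G. assert (Hat := Ha t). rewrite <- G. field. lra.
      * right; right; left. split; [lra|]. intro t. split; auto.
        specialize (G t). simpl in G. assert (Hat := Ha t).
        replace (sqrt (-k)) with (- (W1 t * a t)) by lra. field. lra.
    +
      subst k. left. split; [lra|]. intro t.
      assert (Hat := Ha t). specialize (HB t).
      destruct (Rmult_integral _ _ (HA t)) as [h|h].
      * rewrite h in HB. split; auto.
        assert (E : a t ^ 2 * (W2 t * W2 t) = -(0 + a t ^ 2 * (0 ^ 2 - W2 t ^ 2))) by ring.
        rewrite HB, ?Ropp_0 in E. assert (Hp2 : a t ^ 2 <> 0) by (apply Rgt_not_eq, pow_lt; lra).
        assert (H : W2 t * W2 t = 0) by (apply Rmult_integral in E as [E|E]; [contradiction|lra]).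
        apply Rmult_integral in H as [H|H]; rewrite H, sqrt_0; field; lra.
      * rewrite h in HB. rewrite h, sqrt_0. split; [| field; lra].
        assert (E : a t ^ 2 * (W1 t * W1 t) = (0 + a t ^ 2 * (W1 t ^ 2 - 0 ^ 2))) by ring.
        rewrite HB, ?Ropp_0 in E. assert (Hp2 : a t ^ 2 <> 0) by (apply Rgt_not_eq, pow_lt; lra).
        assert (H : W1 t * W1 t = 0) by (apply Rmult_integral in E as [E|E]; [contradiction|lra]).
        apply Rmult_integral in H as [H|H]; auto.
    +
      assert (HW1 : forall t, W1 t = 0).
      { intro t. destruct (Rmult_integral _ _ (HA t)) as [h|h]; auto.
        exfalso. specialize (HB t). rewrite h in HB. assert (Hat := Ha t). nra. }
      assert (Hg : forall t, (W2 t * a t) * (W2 t * a t) = k).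
      { intro t. specialize (HB t). rewrite HW1 in HB. nra. }
      destruct (sign_const (fun t => W2 t * a t) k (cont_prod W2 a HdW2 Hda) Hp Hg) as [G|G].
      * right; left. split; [lra|]. intro t. split; auto.
        specialize (G t). simpl in G. assert (Hat := Ha t). rewrite <- G. field. lra.
      * left. split; [lra|]. intro t. split; auto.
        specialize (G t). simpl in G. assert (Hat := Ha t).
        replace (sqrt k) with (- (W2 t * a t)) by lra. field. lra.
  - intros [[Hk H]|[[Hk H]|[[Hk H]|[Hk H]]]].
    + apply (back_flat a W1 W2 k 0 (- sqrt k)); auto.
      * replace (- sqrt k * - sqrt k - 0 * 0) with (sqrt k * sqrt k) by ring. symmetry; apply sqrt_sqrt; auto.
      * intro t; rewrite (proj1 (H t)); unfold Rdiv; ring.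
      * intro t; rewrite (proj2 (H t)); unfold Rdiv; ring.
    + apply (back_flat a W1 W2 k 0 (sqrt k)); auto.
      * replace (sqrt k * sqrt k - 0 * 0) with (sqrt k * sqrt k) by ring. symmetry; apply sqrt_sqrt; auto.
      * intro t; rewrite (proj1 (H t)); unfold Rdiv; ring.
      * intro t; rewrite (proj2 (H t)); unfold Rdiv; ring.
    + apply (back_flat a W1 W2 k (- sqrt (- k)) 0); auto.
      * replace (0 * 0 - - sqrt (-k) * - sqrt (-k)) with (- (sqrt (-k) * sqrt (-k))) by ring.
        rewrite sqrt_sqrt; lra.
      * intro t; rewrite (proj1 (H t)); unfold Rdiv; ring.
      * intro t; rewrite (proj2 (H t)); unfold Rdiv; ring.
    + apply (back_flat a W1 W2 k (sqrt (- k)) 0); auto.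
      * replace (0 * 0 - sqrt (-k) * sqrt (-k)) with (- (sqrt (-k) * sqrt (-k))) by ring.
        rewrite sqrt_sqrt; lra.
      * intro t; rewrite (proj1 (H t)); unfold Rdiv; ring.
      * intro t; rewrite (proj2 (H t)); unfold Rdiv; ring.
Qed.
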